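(* Let $N\ge 2$ be an integer and $\kappa,m>0$. For every fixed $k_1\in\mathbb{Z}\cap(0,N)$, $$\sum_{\substack{k_2,k_3,k_4\in\mathbb{Z}\cap(0,N)\\ k_1-k_2-k_3-k_4\equiv 0\ (\mathrm{mod}\ N)}}\big|A^{(1)}_{1,2,3,4}\big|^2\le C\,N^2,$$ with $C>0$ depending only on $\kappa,m$.
   Context: For an integer $N\ge 2$ and constants $\kappa,m>0$, define for $k\in\mathbb{Z}$ the frequency $\omega_k=2\sqrt{\kappa/m}\,\big|\sin(\pi k/N)\big|$ and the $2N$-periodic sign function $\iota(x)=\operatorname{sgn}\sin(\pi x/N)$. For integers $k_1,k_2,k_3,k_4$ set $$T_{1,2,3,4}=-\frac{3}{4\kappa^2}\,\iota(k_2+k_3+k_4)\,\iota(k_2)\,\iota(k_3)\,\iota(k_4)\prod_{i=1}^4\sqrt{\omega_{k_i}},\qquad A^{(1)}_{1,2,3,4}=-\frac{T_{1,2,3,4}}{\omega_{k_1}-\omega_{k_2}-\omega_{k_3}-\omega_{k_4}}.$$ On the summation range (all $k_i\in\mathbb{Z}\cap(0,N)$, $k_1\equiv k_2+k_3+k_4$ mod $N$) the denominator does not vanish. *)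

(* Defs.v *)
From Stdlib Require Import Reals Lra Lia Arith List.
Open Scope R_scope.

Definition Rsgn (x : R) : R :=
  if Rlt_dec 0 x then 1 else if Rlt_dec x 0 then -1 else 0.

Definition omega (kappa m : R) (N : nat) (k : nat) : R :=
  2 * sqrt (kappa / m) * Rabs (sin (PI * INR k / INR N)).

Definition iota (N : nat) (x : nat) : R := Rsgn (sin (PI * INR x / INR N)).

Definition Tcoef (kappa m : R) (N k1 k2 k3 k4 : nat) : R :=
  - (3 / (4 * kappa ^ 2)) * iota N (k2 + k3 + k4) * iota N k2 * iota N k3 * iota N k4
  * (sqrt (omega kappa m N k1) * sqrt (omega kappa m N k2)
     * sqrt (omega kappa m N k3) * sqrt (omega kappa m N k4)).

Definition A1 (kappa m : R) (N k1 k2 k3 k4 : nat) : R :=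
  - Tcoef kappa m N k1 k2 k3 k4 /
    (omega kappa m N k1 - omega kappa m N k2 - omega kappa m N k3 - omega kappa m N k4).

Definition sum_open (N : nat) (f : nat -> R) : R :=
  fold_right Rplus 0 (map f (seq 1 (N - 1))).

Definition S1 (kappa m : R) (N k1 : nat) : R :=
  sum_open N (fun k2 => sum_open N (fun k3 => sum_open N (fun k4 =>
    if Nat.eq_dec ((k2 + k3 + k4) mod N) (k1 mod N)
    then (Rabs (A1 kappa m N k1 k2 k3 k4)) ^ 2 else 0))).

(* Main.v *)
Require Import Defs.
From Stdlib Require Import Reals Lra Lia Psatz List Arith.
Open Scope R_scope.

Lemma PL_base (u v w : R) : 0 < u -> 0 < v -> 0 < w ->
  let e1 := u+v+w in let e2 := u*v+v*w+w*u in let e3 := u*v*w in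
  let P := (u+v)*(v+w)*(w+u) in
  8*e1*e2 <= 9*P /\ 3*e1*e3 <= e2^2 /\ 3*e2 <= e1^2 /\ 0 < P.
Proof.
  intros hu hv hw e1 e2 e3 P; subst e1 e2 e3 P. repeat split.
  - assert (0 <= u*(v-w)^2 + v*(w-u)^2 + w*(u-v)^2) by
      (repeat apply Rplus_le_le_0_compat; apply Rmult_le_pos; try lra; apply pow2_ge_0).
    nra.
  - assert (0 <= (u*v-v*w)^2 + (v*w-w*u)^2 + (w*u-u*v)^2) by
      (repeat apply Rplus_le_le_0_compat; apply pow2_ge_0). nra.
  - assert (0 <= (u-v)^2 + (v-w)^2 + (w-u)^2) by
      (repeat apply Rplus_le_le_0_compat; apply pow2_ge_0). nra.
  - repeat apply Rmult_lt_0_compat; lra.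
Qed.

Lemma PL1 (u v w : R) : 0 < u -> 0 < v -> 0 < w ->
  64*((u+v+w)^3*(u*v*w)) <= 27*((u+v)*(v+w)*(w+u))^2.
Proof.
  intros hu hv hw. destruct (PL_base u v w hu hv hw) as (h1&h2&h3&h4).
  set (e1 := u+v+w) in *. set (e2 := u*v+v*w+w*u) in *. set (e3:=u*v*w) in *.
  set (P := (u+v)*(v+w)*(w+u)) in *.
  assert (0 < e1) by (unfold e1; lra).
  assert (0 < e2) by (unfold e2; nra).
  assert (64*(e1*e2)^2 <= 81 * P^2).
  { assert (0 <= 8*e1*e2) by nra. 
    replace (64*(e1*e2)^2) with ((8*e1*e2)^2) by ring.
    replace (81*P^2) with ((9*P)^2) by ring. apply pow_incr. lra. }
  assert (e1^2*(3*e1*e3) <= e1^2 * e2^2) by (apply Rmult_le_compat_l; nra).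
  nra.
Qed.

Lemma PL2 (u v w : R) : 0 < u -> 0 < v -> 0 < w ->
  64*(u*v+v*w+w*u)^3 <= 27*((u+v)*(v+w)*(w+u))^2.
Proof.
  intros hu hv hw. destruct (PL_base u v w hu hv hw) as (h1&h2&h3&h4).
  set (e1 := u+v+w) in *. set (e2 := u*v+v*w+w*u) in *. set (e3:=u*v*w) in *.
  set (P := (u+v)*(v+w)*(w+u)) in *.
  assert (0 < e1) by (unfold e1; lra).
  assert (0 < e2) by (unfold e2; nra).
  assert (64*(e1*e2)^2 <= 81 * P^2).
  { assert (0 <= 8*e1*e2) by nra. 
    replace (64*(e1*e2)^2) with ((8*e1*e2)^2) by ring.
    replace (81*P^2) with ((9*P)^2) by ring. apply pow_incr. lra. }
  assert (e2^2*(3*e2) <= e2^2 * e1^2) by (apply Rmult_le_compat_l; nra).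
  nra.
Qed.

Section Alg.
Variables u v w : R.
Hypotheses (hu : 0 < u) (hv : 0 < v) (hw : 0 < w).
Let e1 := u+v+w.
Let e2 := u*v+v*w+w*u.
Let e3 := u*v*w.
Let P := (u+v)*(v+w)*(w+u).
Let U := (1+u^2)*(1+v^2)*(1+w^2).
Let Q := (e1-e3)*(1-e2).

Lemma U_pos : 0 < U.
Proof. unfold U. assert (0 <= u^2) by apply pow2_ge_0. assert (0 <= v^2) by apply pow2_ge_0.
 assert (0 <= w^2) by apply pow2_ge_0. repeat apply Rmult_lt_0_compat; lra. Qed.

Lemma diff_id : 2*Q/U - 2*u/(1+u^2) - 2*v/(1+v^2) - 2*w/(1+w^2) = -(4*P/U).
Proof.
  assert (0 <= u^2) by apply pow2_ge_0. assert (0 <= v^2) by apply pow2_ge_0.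
  assert (0 <= w^2) by apply pow2_ge_0.
  unfold Q, P, U, e1, e2, e3. field. repeat split; lra.
Qed.

Lemma prod_id : 2*Q/U * (2*u/(1+u^2) * (2*v/(1+v^2)) * (2*w/(1+w^2))) = 16*(e3*Q)/U^2.
Proof.
  assert (0 <= u^2) by apply pow2_ge_0. assert (0 <= v^2) by apply pow2_ge_0.
  assert (0 <= w^2) by apply pow2_ge_0.
  unfold Q, P, U, e1, e2, e3. field. repeat split; lra.
Qed.

Lemma alg_A (S : R) : 0 < e1 - e3 -> 0 < 1 - e2 -> 0 <= S -> S <= 6*e1 ->
  2*Q/U * (2*u/(1+u^2) * (2*v/(1+v^2)) * (2*w/(1+w^2))) * S^2
  <= 16 * (2*Q/U - 2*u/(1+u^2) - 2*v/(1+v^2) - 2*w/(1+w^2))^2.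
Proof.
  intros ha hb hS0 hS1. rewrite prod_id, diff_id.
  pose proof U_pos as hU.
  assert (h1 := PL1 u v w hu hv hw). fold e1 e3 P in h1.
  assert (he3 : 0 < e3) by (unfold e3; repeat apply Rmult_lt_0_compat; lra).
  assert (hQ : 0 <= Q <= e1). { unfold Q. assert (0 <= e2) by (unfold e2; nra). split; nra. }
  assert (hS2 : S^2 <= 36*e1^2) by nra.
  assert (e3*Q*S^2 <= 16*P^2).
  { assert (e3*Q*S^2 <= e3*e1*(36*e1^2)).
    { apply Rmult_le_compat; try apply pow2_ge_0; nra. }
    nra. }
  replace (16 * (e3 * Q) / U ^ 2 * S ^ 2) with (16*(e3*Q*S^2)/U^2) by (field; lra).
  replace (16 * (- (4 * P / U)) ^ 2) with (16*(16*P^2)/U^2) by (field; lra).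
  unfold Rdiv. apply Rmult_le_compat_r.
  - apply Rlt_le, Rinv_0_lt_compat. nra.
  - lra.
Qed.

Lemma alg_C (S : R) : e1 - e3 < 0 -> 1 - e2 < 0 -> 0 <= S -> S*e3 <= 6*e2 ->
  2*Q/U * (2*u/(1+u^2) * (2*v/(1+v^2)) * (2*w/(1+w^2))) * S^2
  <= 16 * (2*Q/U - 2*u/(1+u^2) - 2*v/(1+v^2) - 2*w/(1+w^2))^2.
Proof.
  intros ha hb hS0 hS1. rewrite prod_id, diff_id.
  pose proof U_pos as hU.
  assert (h1 := PL2 u v w hu hv hw). fold e2 P in h1.
  assert (he3 : 0 < e3) by (unfold e3; repeat apply Rmult_lt_0_compat; lra).
  assert (he1 : 0 < e1) by (unfold e1; lra).
  assert (hQ : 0 <= Q <= e3*e2). { unfold Q. split; nra. }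
  assert (hS2 : (S*e3)^2 <= 36*e2^2). { assert (0 <= S*e3) by (apply Rmult_le_pos; lra). replace (36*e2^2) with ((6*e2)^2) by ring. apply pow_incr; lra. }
  assert (e3*Q*S^2 <= 16*P^2).
  { assert (e3*(e3*Q*S^2) <= e3*(e2*(36*e2^2))).
    { replace (e3*(e3*Q*S^2)) with (Q*(S*e3)^2) by ring.
      replace (e3*(e2*(36*e2^2))) with ((e3*e2)*(36*e2^2)) by ring.
      apply Rmult_le_compat; try apply pow2_ge_0; nra. }
    assert (e3*Q*S^2 <= 36*e2^3) by nra.
    nra. }
  replace (16 * (e3 * Q) / U ^ 2 * S ^ 2) with (16*(e3*Q*S^2)/U^2) by (field; lra).
  replace (16 * (- (4 * P / U)) ^ 2) with (16*(16*P^2)/U^2) by (field; lra).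
  unfold Rdiv. apply Rmult_le_compat_r.
  - apply Rlt_le, Rinv_0_lt_compat. nra.
  - lra.
Qed.

Lemma alg_B :
  - (2*Q/U) * (2*u/(1+u^2) * (2*v/(1+v^2)) * (2*w/(1+w^2)))
  <= /4 * (- (2*Q/U) - 2*u/(1+u^2) - 2*v/(1+v^2) - 2*w/(1+w^2))^2.
Proof.
  assert (0 <= u^2) by apply pow2_ge_0. assert (0 <= v^2) by apply pow2_ge_0.
  assert (0 <= w^2) by apply pow2_ge_0.
  pose proof U_pos as hU.
  replace (- (2*Q/U) * (2*u/(1+u^2) * (2*v/(1+v^2)) * (2*w/(1+w^2))))
    with (16*(e3*((e1-e3)*(e2-1)))/U^2)
    by (unfold Q, U, e1, e2, e3; field; repeat split; lra).
  replace (- (2*Q/U) - 2*u/(1+u^2) - 2*v/(1+v^2) - 2*w/(1+w^2))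
    with (-(4*((e1-e3) + e3*(e2-1))/U))
    by (unfold Q, U, e1, e2, e3; field; repeat split; lra).
  replace (/4 * (-(4*((e1-e3) + e3*(e2-1))/U))^2) with (4*((e1-e3) + e3*(e2-1))^2/U^2)
    by (field; lra).
  unfold Rdiv. apply Rmult_le_compat_r.
  - apply Rlt_le, Rinv_0_lt_compat. nra.
  - assert (0 <= ((e1-e3) - e3*(e2-1))^2) by apply pow2_ge_0. nra.
Qed.
End Alg.

Lemma jordan3 (a : R) : 0 <= a -> a <= 2 -> a <= 3 * sin a.
Proof.
  intros h0 h1. pose proof (pre_sin_bound a 0 h0 ltac:(lra)) as [H _].
  replace (2*0+1)%nat with 1%nat in H by reflexivity.
  assert (E : sin_approx a 1 = a - a^3/6) by (unfold sin_approx, sin_term; simpl; field).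
  rewrite E in H. nra.
Qed.

Lemma half (x : R) : 0 < x < PI -> exists u c, 0 < u /\ 0 < c /\
  sin (x/2) = u*c /\ cos (x/2) = c /\ c^2*(1+u^2) = 1 /\
  sin x = 2*u/(1+u^2) /\ x <= 6*u /\ (PI - x)*u <= 6.
Proof.
  intros [h0 h1]. pose proof PI_4 as hpi.
  set (p := x/2).
  assert (hc : 0 < cos p) by (apply cos_gt_0; unfold p; lra).
  assert (hs : 0 < sin p) by (apply sin_gt_0; unfold p; lra).
  assert (hsc := sin2_cos2 p). unfold Rsqr in hsc.
  exists (sin p / cos p), (cos p). repeat split.
  - apply Rdiv_lt_0_compat; lra.
  - lra.
  - field. lra.
  - replace (cos p ^2 * (1 + (sin p / cos p)^2)) with (sin p * sin p + cos p * cos p) by (field; lra). lra.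
  - replace x with (2*p) at 1 by (unfold p; field). rewrite sin_2a.
    assert (0 < 1 + (sin p / cos p)^2) by (pose proof (pow2_ge_0 (sin p / cos p)); lra).
    replace (1 + (sin p/cos p)^2) with ((sin p*sin p + cos p*cos p)/ (cos p)^2) by (field; lra).
    rewrite hsc. field. lra.
  - assert (hp : p <= 3 * sin p) by (apply jordan3; unfold p; lra).
    assert (cos p <= 1) by (pose proof (COS_bound p); lra).
    assert (sin p <= sin p / cos p).
    { apply (Rmult_le_reg_r (cos p)); [lra|].
      replace (sin p / cos p * cos p) with (sin p) by (field; lra). nra. }
    unfold p in *. lra.
  - assert (hp : PI/2 - p <= 3 * sin (PI/2 - p)) by (apply jordan3; unfold p; lra).
    rewrite sin_shift in hp.
    assert (sin p <= 1) by (pose proof (SIN_bound p); lra).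
    assert (E : (PI - x) = 2*(PI/2 - p)) by (unfold p; field).
    rewrite E.
    assert (0 <= PI/2 - p) by (unfold p; lra).
    assert (2 * (PI / 2 - p) * (sin p / cos p) <= 2 * (PI / 2 - p) * (1/ cos p)).
    { apply Rmult_le_compat_l; [lra|]. unfold Rdiv. apply Rmult_le_compat_r; [|lra].
      apply Rlt_le, Rinv_0_lt_compat; lra. }
    assert (2 * (PI / 2 - p) * (1/ cos p) <= 6) .
    { apply (Rmult_le_reg_r (cos p)); [lra|].
      replace (2 * (PI / 2 - p) * (1 / cos p) * cos p) with (2 * (PI / 2 - p)) by (field; lra).
      lra. }
    lra.
Qed.

Lemma trig_all (x y z : R) : 0 < x < PI -> 0 < y < PI -> 0 < z < PI ->
  exists u v w W, 0 < u /\ 0 < v /\ 0 < w /\ 0 < W /\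
  sin x = 2*u/(1+u^2) /\ sin y = 2*v/(1+v^2) /\ sin z = 2*w/(1+w^2) /\
  x <= 6*u /\ y <= 6*v /\ z <= 6*w /\
  (PI - x)*u <= 6 /\ (PI - y)*v <= 6 /\ (PI - z)*w <= 6 /\
  sin ((x+y+z)/2) = W*((u+v+w) - u*v*w) /\
  cos ((x+y+z)/2) = W*(1 - (u*v+v*w+w*u)) /\
  sin (x+y+z) = 2 * (((u+v+w) - u*v*w)*(1 - (u*v+v*w+w*u))) / ((1+u^2)*(1+v^2)*(1+w^2)).
Proof.
  intros hx hy hz.
  destruct (half x hx) as (u & c1 & hu & hc1 & hs1 & hco1 & hq1 & hsx & hx6 & hpx).
  destruct (half y hy) as (v & c2 & hv & hc2 & hs2 & hco2 & hq2 & hsy & hy6 & hpy).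
  destruct (half z hz) as (w & c3 & hw & hc3 & hs3 & hco3 & hq3 & hsz & hz6 & hpz).
  assert (hsph : sin ((x+y+z)/2) = (c1*c2*c3)*((u+v+w) - u*v*w)).
  { replace ((x+y+z)/2) with (x/2 + (y/2 + z/2)) by field.
    rewrite ?sin_plus, ?cos_plus, ?sin_plus, hs1, hs2, hs3, hco1, hco2, hco3. ring. }
  assert (hcph : cos ((x+y+z)/2) = (c1*c2*c3)*(1 - (u*v+v*w+w*u))).
  { replace ((x+y+z)/2) with (x/2 + (y/2 + z/2)) by field.
    rewrite ?sin_plus, ?cos_plus, ?sin_plus, hs1, hs2, hs3, hco1, hco2, hco3. ring. }
  exists u, v, w, (c1*c2*c3). repeat split; auto.
  - repeat apply Rmult_lt_0_compat; lra.
  - replace (x+y+z) with (2*((x+y+z)/2)) by field. rewrite sin_2a, hsph, hcph.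
    assert (hU : 0 < (1+u^2)*(1+v^2)*(1+w^2)).
    { pose proof (pow2_ge_0 u). pose proof (pow2_ge_0 v). pose proof (pow2_ge_0 w).
      repeat apply Rmult_lt_0_compat; lra. }
    assert (hW : (c1*c2*c3)^2 * ((1+u^2)*(1+v^2)*(1+w^2)) = 1).
    { replace ((c1*c2*c3)^2 * ((1+u^2)*(1+v^2)*(1+w^2))) with
        ((c1^2*(1+u^2))*(c2^2*(1+v^2))*(c3^2*(1+w^2))) by ring.
      rewrite hq1, hq2, hq3. ring. }
    apply (Rmult_eq_reg_r ((1+u^2)*(1+v^2)*(1+w^2))); [|lra].
    replace (2 * (c1 * c2 * c3 * (u + v + w - u * v * w)) * (c1 * c2 * c3 * (1 - (u * v + v * w + w * u))) *
      ((1 + u ^ 2) * (1 + v ^ 2) * (1 + w ^ 2))) with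
      (2*((c1*c2*c3)^2 * ((1+u^2)*(1+v^2)*(1+w^2)))*((u + v + w - u * v * w)*(1 - (u * v + v * w + w * u)))) by ring.
    rewrite hW. pose proof (pow2_ge_0 u). pose proof (pow2_ge_0 v). pose proof (pow2_ge_0 w). field. repeat split; lra.
Qed.

Lemma trigA (x y z : R) : 0 < x < PI -> 0 < y < PI -> 0 < z < PI -> x+y+z < PI ->
  sin (x+y+z) * (sin x * sin y * sin z) * (x+y+z)^2
  <= 16 * (sin (x+y+z) - sin x - sin y - sin z)^2.
Proof.
  intros hx hy hz hS.
  destruct (trig_all x y z hx hy hz) as (u&v&w&W&hu&hv&hw&hW&sx&sy&sz&x6&y6&z6&_&_&_&hsph&hcph&hsS).
  assert (h1 : 0 < sin ((x+y+z)/2)) by (apply sin_gt_0; lra).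
  assert (h2 : 0 < cos ((x+y+z)/2)) by (apply cos_gt_0; lra).
  rewrite hsph in h1. rewrite hcph in h2.
  assert (0 < u+v+w - u*v*w) by (apply (Rmult_lt_reg_l W); lra).
  assert (0 < 1 - (u*v+v*w+w*u)) by (apply (Rmult_lt_reg_l W); lra).
  rewrite hsS, sx, sy, sz. apply alg_A; auto; lra.
Qed.

Lemma trigB (x y z : R) : 0 < x < PI -> 0 < y < PI -> 0 < z < PI ->
  - sin (x+y+z) * (sin x * sin y * sin z)
  <= /4 * (- sin (x+y+z) - sin x - sin y - sin z)^2.
Proof.
  intros hx hy hz.
  destruct (trig_all x y z hx hy hz) as (u&v&w&W&hu&hv&hw&hW&sx&sy&sz&x6&y6&z6&_&_&_&hsph&hcph&hsS).
  rewrite hsS, sx, sy, sz. apply alg_B.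
Qed.

Lemma trigC (x y z : R) : 0 < x < PI -> 0 < y < PI -> 0 < z < PI -> 2*PI < x+y+z ->
  sin (x+y+z) * (sin x * sin y * sin z) * (3*PI - (x+y+z))^2
  <= 16 * (sin (x+y+z) - sin x - sin y - sin z)^2.
Proof.
  intros hx hy hz hS.
  destruct (trig_all x y z hx hy hz) as (u&v&w&W&hu&hv&hw&hW&sx&sy&sz&_&_&_&px&py&pz&hsph&hcph&hsS).
  assert (h1 : sin ((x+y+z)/2) < 0) by (apply sin_lt_0; lra).
  assert (h2 : cos ((x+y+z)/2) < 0) by (apply cos_lt_0; lra).
  rewrite hsph in h1. rewrite hcph in h2.
  assert (u+v+w - u*v*w < 0) by (apply (Rmult_lt_reg_l W); lra).
  assert (1 - (u*v+v*w+w*u) < 0) by (apply (Rmult_lt_reg_l W); lra).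
  rewrite hsS, sx, sy, sz. apply alg_C; auto; try lra.
  replace ((3*PI - (x+y+z))*(u*v*w)) with (((PI-x)*u)*(v*w) + ((PI-y)*v)*(w*u) + ((PI-z)*w)*(u*v)) by ring.
  assert (0 < v*w) by nra. assert (0 < w*u) by nra. assert (0 < u*v) by nra.
  nra.
Qed.

Lemma Rsgn_sq (x : R) : Rsgn x ^ 2 <= 1.
Proof. unfold Rsgn. destruct (Rlt_dec 0 x); [lra|]. destruct (Rlt_dec x 0); lra. Qed.

Lemma A_bound (kappa m : R) (N k1 k2 k3 k4 : nat) : 0 < kappa -> 0 < m ->
  let s := fun k => sin (PI * INR k / INR N) in
  0 <= s k1 -> 0 <= s k2 -> 0 <= s k3 -> 0 <= s k4 ->
  Rabs (Defs.A1 kappa m N k1 k2 k3 k4) ^ 2 <=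
  ((3 / (4 * kappa ^ 2))^2 * (2 * sqrt (kappa / m))^2) *
  (s k1 * s k2 * s k3 * s k4 * (/ (s k1 - s k2 - s k3 - s k4))^2).
Proof.
  intros hk hm s h1 h2 h3 h4.
  unfold Defs.A1, Tcoef, omega. fold (s k1) (s k2) (s k3) (s k4).
  rewrite (Rabs_pos_eq (s k1) h1), (Rabs_pos_eq (s k2) h2), (Rabs_pos_eq (s k3) h3), (Rabs_pos_eq (s k4) h4).
  set (i1 := iota N (k2+k3+k4)). set (i2 := iota N k2). set (i3 := iota N k3). set (i4 := iota N k4).
  assert (hi : (i1*i2*i3*i4)^2 <= 1).
  { assert (q1 : i1^2 <= 1) by apply Rsgn_sq.
    assert (q2 : i2^2 <= 1) by apply Rsgn_sq.
    assert (q3 : i3^2 <= 1) by apply Rsgn_sq.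
    assert (q4 : i4^2 <= 1) by apply Rsgn_sq.
    replace ((i1*i2*i3*i4)^2) with ((i1^2*i2^2)*(i3^2*i4^2)) by ring.
    pose proof (pow2_ge_0 i1). pose proof (pow2_ge_0 i2). pose proof (pow2_ge_0 i3). pose proof (pow2_ge_0 i4).
    assert (i1^2*i2^2 <= 1) by nra. assert (i3^2*i4^2 <= 1) by nra.
    assert (0 <= i1^2*i2^2) by nra. assert (0 <= i3^2*i4^2) by nra. nra. }
  set (c := 2 * sqrt (kappa / m)).
  assert (hc : 0 < c).
  { unfold c. assert (0 < sqrt (kappa/m)) by (apply sqrt_lt_R0; apply Rdiv_lt_0_compat; lra). lra. }
  rewrite pow2_abs.
  replace (c * s k1 - c * s k2 - c * s k3 - c * s k4) with (c * (s k1 - s k2 - s k3 - s k4)) by ring.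
  unfold Rdiv. rewrite (Rinv_mult c).
  set (d := / (s k1 - s k2 - s k3 - s k4)).
  replace ((- (- (3 * / (4 * kappa ^ 2)) * i1 * i2 * i3 * i4 *
      (sqrt (c * s k1) * sqrt (c * s k2) * sqrt (c * s k3) * sqrt (c * s k4))) * (/ c * d)) ^ 2)
   with ((3 * / (4 * kappa ^ 2))^2 * (i1*i2*i3*i4)^2 *
      ((sqrt (c * s k1) * sqrt (c * s k1)) * (sqrt (c * s k2) * sqrt (c * s k2)) *
       (sqrt (c * s k3) * sqrt (c * s k3)) * (sqrt (c * s k4) * sqrt (c * s k4))) * (/c)^2 * d^2) by ring.
  rewrite !sqrt_sqrt by (apply Rmult_le_pos; lra).
  replace ((3 * / (4 * kappa ^ 2)) ^ 2 * (i1 * i2 * i3 * i4) ^ 2 *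
      (c * s k1 * (c * s k2) * (c * s k3) * (c * s k4)) * (/ c) ^ 2 * d ^ 2)
   with ((3 * / (4 * kappa ^ 2)) ^ 2 * c^2 * (s k1 * s k2 * s k3 * s k4 * d^2) * (i1 * i2 * i3 * i4) ^ 2)
   by (field; lra).
  assert (0 <= (3 * / (4 * kappa ^ 2)) ^ 2 * c^2 * (s k1 * s k2 * s k3 * s k4 * d^2)).
  { apply Rmult_le_pos; [apply Rmult_le_pos; apply pow2_ge_0|].
    apply Rmult_le_pos; [|apply pow2_ge_0]. repeat apply Rmult_le_pos; lra. }
  set (X := (3 * / (4 * kappa ^ 2)) ^ 2 * c ^ 2 * (s k1 * s k2 * s k3 * s k4 * d ^ 2)) in *.
  assert (X * (i1 * i2 * i3 * i4) ^ 2 <= X * 1) by (apply Rmult_le_compat_l; auto).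
  unfold Rdiv. lra.
Qed.

Lemma pow2_gt_0 (x : R) : 0 < x -> 0 < x^2.
Proof. intros; nra. Qed.

Lemma inv_bound (num d0 B : R) : 0 <= num -> 0 <= B -> num <= B * d0^2 -> num * (/d0)^2 <= B.
Proof.
  intros h1 h2 h3. destruct (Req_dec d0 0) as [->|hd].
  - rewrite Rinv_0. lra.
  - assert (0 < d0^2) by (replace (d0^2) with (Rsqr d0) by (unfold Rsqr; ring); apply Rsqr_pos_lt; auto).
    replace (num * (/d0)^2) with (num / d0^2) by (field; auto).
    apply (Rmult_le_reg_r (d0^2)); auto. unfold Rdiv. rewrite Rmult_assoc, Rinv_l by lra. lra.
Qed.

Definition Ilt (k1 k : nat) : R := if (k <? k1)%nat then 1 else 0.
Definition Igt (k1 k : nat) : R := if (k1 <? k)%nat then 1 else 0.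
Definition th (N k : nat) : R := PI * INR k / INR N.

Lemma th_range (N k : nat) : (0 < k < N)%nat -> 0 < th N k < PI.
Proof.
  intros [h1 h2]. unfold th. pose proof PI_RGT_0.
  assert (0 < INR k) by (apply lt_0_INR; lia).
  assert (INR k < INR N) by (apply lt_INR; lia).
  split.
  - apply Rdiv_lt_0_compat; [nra|lra].
  - apply (Rmult_lt_reg_r (INR N)); [lra|]. field_simplify; [|lra]. nra.
Qed.

Lemma mod_decomp (N k1 a : nat) : (0 < k1 < N)%nat -> (a < 3*N)%nat -> a mod N = k1 mod N ->
  a = k1 \/ a = (k1 + N)%nat \/ a = (k1 + 2*N)%nat.
Proof.
  intros [h1 h2] ha hm. rewrite (Nat.mod_small k1 N h2) in hm.
  pose proof (Nat.div_mod_eq a N) as E. rewrite hm in E.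
  destruct (a / N)%nat as [|[|[|q]]] eqn:Eq; [lia|lia|lia|]. nia.
Qed.

Lemma Ilt_nn k1 k : 0 <= Ilt k1 k. Proof. unfold Ilt; destruct (k <? k1)%nat; lra. Qed.
Lemma Igt_nn k1 k : 0 <= Igt k1 k. Proof. unfold Igt; destruct (k1 <? k)%nat; lra. Qed.

Lemma term_bound (kappa m : R) (N k1 k2 k3 k4 : nat) : 0 < kappa -> 0 < m ->
  (0 < k1 < N)%nat -> (0 < k2 < N)%nat -> (0 < k3 < N)%nat -> (0 < k4 < N)%nat ->
  (k2 + k3 + k4) mod N = k1 mod N ->
  Rabs (Defs.A1 kappa m N k1 k2 k3 k4) ^ 2 <=
  ((3 / (4 * kappa ^ 2))^2 * (2 * sqrt (kappa / m))^2) *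
  (/4 + Ilt k1 k2 * (Ilt k1 k3 * (16 / (th N k1)^2)) + Igt k1 k2 * (Igt k1 k3 * (16 / (PI - th N k1)^2))).
Proof.
  intros hk hm r1 r2 r3 r4 hmod.
  pose proof (th_range N k1 r1) as t1. pose proof (th_range N k2 r2) as t2.
  pose proof (th_range N k3 r3) as t3. pose proof (th_range N k4 r4) as t4.
  assert (sp : forall k, (0 < k < N)%nat -> 0 < sin (PI * INR k / INR N)).
  { intros k hk'. apply sin_gt_0; apply (th_range N k hk'). }
  eapply Rle_trans; [apply A_bound; auto; apply Rlt_le, sp; auto|].
  apply Rmult_le_compat_l; [apply Rmult_le_pos; apply pow2_ge_0|].
  cbv beta. fold (th N k1) (th N k2) (th N k3) (th N k4).
  pose proof (Ilt_nn k1 k2). pose proof (Ilt_nn k1 k3). pose proof (Igt_nn k1 k2). pose proof (Igt_nn k1 k3).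
  assert (0 <= 16 / th N k1 ^2) by (apply Rlt_le, Rdiv_lt_0_compat; [lra| apply pow2_gt_0; lra]).
  assert (0 <= 16 / (PI - th N k1) ^2) by (apply Rlt_le, Rdiv_lt_0_compat; [lra| apply pow2_gt_0; lra]).
  assert (0 <= Ilt k1 k2 * (Ilt k1 k3 * (16 / (th N k1)^2))) by (apply Rmult_le_pos; auto; apply Rmult_le_pos; auto).
  assert (0 <= Igt k1 k2 * (Igt k1 k3 * (16 / (PI - th N k1)^2))) by (apply Rmult_le_pos; auto; apply Rmult_le_pos; auto).
  assert (hsum : th N k2 + th N k3 + th N k4 = th N k1 + INR ((k2+k3+k4) - k1) / INR N * PI).
  { assert (INR N <> 0) by (apply not_0_INR; lia).
    assert (k1 <= k2 + k3 + k4)%nat.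
    { destruct (mod_decomp N k1 (k2+k3+k4) r1 ltac:(lia) hmod) as [E|[E|E]]; lia. }
    unfold th. rewrite minus_INR by auto. rewrite !plus_INR. field. auto. }
  assert (hnum : 0 <= sin (th N k1) * sin (th N k2) * sin (th N k3) * sin (th N k4)).
  { pose proof (sin_gt_0 _ (proj1 t1) (proj2 t1)). pose proof (sin_gt_0 _ (proj1 t2) (proj2 t2)).
    pose proof (sin_gt_0 _ (proj1 t3) (proj2 t3)). pose proof (sin_gt_0 _ (proj1 t4) (proj2 t4)).
    repeat apply Rmult_le_pos; lra. }
  assert (INR N <> 0) by (apply not_0_INR; lia).
  destruct (mod_decomp N k1 (k2+k3+k4) r1 ltac:(lia) hmod) as [E|[E|E]].
  -
    replace (k2+k3+k4 - k1)%nat with 0%nat in hsum by lia.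
    assert (e2 : Ilt k1 k2 = 1) by (unfold Ilt; replace (k2 <? k1)%nat with true; auto; symmetry; apply Nat.ltb_lt; lia).
    assert (e3 : Ilt k1 k3 = 1) by (unfold Ilt; replace (k3 <? k1)%nat with true; auto; symmetry; apply Nat.ltb_lt; lia).
    assert (hS : th N k2 + th N k3 + th N k4 = th N k1) by (rewrite hsum; simpl; field; auto).
    assert (hA := trigA _ _ _ t2 t3 t4 ltac:(lra)). rewrite hS in hA.
    assert (hb : sin (th N k1) * sin (th N k2) * sin (th N k3) * sin (th N k4) *
      (/ (sin (th N k1) - sin (th N k2) - sin (th N k3) - sin (th N k4)))^2 <= 16 / th N k1 ^2).
    { apply inv_bound; auto. apply (Rmult_le_reg_r (th N k1 ^2)); [apply pow2_gt_0; lra|].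
      replace (16 / th N k1 ^ 2 * (sin (th N k1) - sin (th N k2) - sin (th N k3) - sin (th N k4)) ^ 2 * th N k1 ^ 2)
        with (16 * (sin (th N k1) - sin (th N k2) - sin (th N k3) - sin (th N k4)) ^ 2)
        by (field; lra).
      lra. }
    rewrite e2, e3. lra.
  -
    replace (k2+k3+k4 - k1)%nat with N in hsum by lia.
    assert (hS : th N k2 + th N k3 + th N k4 = th N k1 + PI) by (rewrite hsum; field; auto).
    assert (hB := trigB _ _ _ t2 t3 t4). rewrite hS, neg_sin in hB.
    assert (hb : sin (th N k1) * sin (th N k2) * sin (th N k3) * sin (th N k4) *
      (/ (sin (th N k1) - sin (th N k2) - sin (th N k3) - sin (th N k4)))^2 <= /4).
    { apply inv_bound; auto; [lra|]. replace (- - sin (th N k1)) with (sin (th N k1)) in hB by ring. lra. }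
    lra.
  -
    replace (k2+k3+k4 - k1)%nat with (2*N)%nat in hsum by lia.
    assert (e2 : Igt k1 k2 = 1) by (unfold Igt; replace (k1 <? k2)%nat with true; auto; symmetry; apply Nat.ltb_lt; lia).
    assert (e3 : Igt k1 k3 = 1) by (unfold Igt; replace (k1 <? k3)%nat with true; auto; symmetry; apply Nat.ltb_lt; lia).
    assert (hS : th N k2 + th N k3 + th N k4 = th N k1 + 2*PI)
      by (rewrite hsum, mult_INR; simpl (INR 2); field; auto).
    assert (hC := trigC _ _ _ t2 t3 t4 ltac:(lra)). rewrite hS in hC.
    assert (hsin : sin (th N k1 + 2*PI) = sin (th N k1)).
    { replace (th N k1 + 2*PI) with ((th N k1 + PI) + PI) by ring. rewrite !neg_sin. ring. }
    rewrite hsin in hC.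
    replace (3 * PI - (th N k1 + 2 * PI)) with (PI - th N k1) in hC by ring.
    assert (hb : sin (th N k1) * sin (th N k2) * sin (th N k3) * sin (th N k4) *
      (/ (sin (th N k1) - sin (th N k2) - sin (th N k3) - sin (th N k4)))^2 <= 16 / (PI - th N k1) ^2).
    { apply inv_bound; auto. apply (Rmult_le_reg_r ((PI - th N k1) ^2)); [apply pow2_gt_0; lra|].
      replace (16 / (PI - th N k1) ^ 2 * (sin (th N k1) - sin (th N k2) - sin (th N k3) - sin (th N k4)) ^ 2 * (PI - th N k1) ^ 2)
        with (16 * (sin (th N k1) - sin (th N k2) - sin (th N k3) - sin (th N k4)) ^ 2)
        by (field; lra).
      lra. }
    rewrite e2, e3. lra.
Qed.

Definition SL (f : nat -> R) (l : list nat) : R := fold_right Rplus 0 (map f l).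

Lemma SL_le (l : list nat) f g : (forall x, In x l -> f x <= g x) -> SL f l <= SL g l.
Proof.
  unfold SL in *. induction l as [|a l IH]; intros H; simpl; [lra|].
  apply Rplus_le_compat; [apply H; left; auto| apply IH; intros; apply H; right; auto].
Qed.

Lemma SL_plus (l : list nat) f g : SL (fun x => f x + g x) l = SL f l + SL g l.
Proof. unfold SL in *. induction l as [|a l IH]; simpl; [lra|]. rewrite IH. ring. Qed.

Lemma SL_scal (l : list nat) a f : SL (fun x => a * f x) l = a * SL f l.
Proof. unfold SL in *. induction l as [|b l IH]; simpl; [lra|]. rewrite IH. ring. Qed.

Lemma SL_const (l : list nat) c : SL (fun _ => c) l = INR (length l) * c.
Proof.
  unfold SL in *. induction l as [|b l IH]; simpl; [lra|]. rewrite IH.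
  destruct (length l); simpl; ring.
Qed.

Lemma SL_zero (l : list nat) f : (forall x, In x l -> f x = 0) -> SL f l = 0.
Proof.
  unfold SL in *. induction l as [|a l IH]; intros H; simpl; [lra|].
  rewrite IH by (intros; apply H; right; auto). rewrite (H a) by (left; auto). ring.
Qed.

Lemma SL_unique (l : list nat) (F : nat -> nat) (G : nat) (h : nat -> R) (B : R) :
  NoDup l -> (forall x y, In x l -> In y l -> F x = G -> F y = G -> x = y) ->
  (forall x, In x l -> F x = G -> h x <= B) -> 0 <= B ->
  SL (fun k => if Nat.eq_dec (F k) G then h k else 0) l <= B.
Proof.
  unfold SL in *. induction l as [|a l IH]; intros hnd hu hb hB; simpl; [lra|].
  inversion hnd as [|a' l' hnin hnd']; subst.
  destruct (Nat.eq_dec (F a) G) as [e|ne].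
  - assert (fold_right Rplus 0 (map (fun k => if Nat.eq_dec (F k) G then h k else 0) l) = 0) as Z.
    { apply SL_zero. intros x hx. destruct (Nat.eq_dec (F x) G) as [e'|]; auto.
      exfalso. assert (x = a) by (apply hu; auto; [right|left]; auto). subst. auto. }
    rewrite Z. rewrite Rplus_0_r. apply hb; auto. left; auto.
  - rewrite Rplus_0_l. apply IH; auto.
    + intros x y hx hy. apply hu; right; auto.
    + intros x hx. apply hb; right; auto.
Qed.

Lemma SL_Ilt (k1 a n : nat) : SL (Ilt k1) (seq a n) = INR (Nat.min n (k1 - a)).
Proof.
  unfold SL in *. revert a. induction n as [|n IH]; intros a; [simpl; auto|]. cbn [seq map fold_right].
  rewrite IH. unfold Ilt. destruct (Nat.ltb_spec a k1).
  - replace (Nat.min (S n) (k1 - a)) with (S (Nat.min n (k1 - S a))) by lia.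
    rewrite S_INR. ring.
  - replace (Nat.min (S n) (k1 - a)) with (Nat.min n (k1 - S a)) by lia. ring.
Qed.

Lemma SL_Igt (k1 a n : nat) : SL (Igt k1) (seq a n) = INR (n - (S k1 - a)).
Proof.
  unfold SL in *. revert a. induction n as [|n IH]; intros a; [simpl; auto|]. cbn [seq map fold_right].
  rewrite IH. unfold Igt. destruct (Nat.ltb_spec k1 a).
  - replace (S n - (S k1 - a))%nat with (S (n - (S k1 - S a))) by lia.
    rewrite S_INR. ring.
  - replace (S n - (S k1 - a))%nat with (n - (S k1 - S a))%nat by lia. ring.
Qed.

Lemma SL_ext (l : list nat) f g : (forall x, f x = g x) -> SL f l = SL g l.
Proof. unfold SL. intros H. induction l as [|a l IH]; simpl; [auto|]. rewrite IH, H. auto. Qed.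

Lemma SL_comb (l : list nat) (K a b c : R) (f g : nat -> R) :
  SL (fun x => K * (a + f x * b + g x * c)) l = K * (INR (length l) * a + SL f l * b + SL g l * c).
Proof.
  unfold SL. induction l as [|z l IH]; simpl; [ring|]. rewrite IH.
  destruct (length l); simpl; ring.
Qed.

Lemma mod_inj (N a x y : nat) : (0 < N)%nat -> (x < N)%nat -> (y < N)%nat ->
  ((a + x) mod N = (a + y) mod N)%nat -> x = y.
Proof.
  intros hN hx hy E.
  pose proof (Nat.div_mod_eq (a+x) N) as E1. pose proof (Nat.div_mod_eq (a+y) N) as E2.
  rewrite E in E1.
  set (q1 := ((a+x)/N)%nat) in *. set (q2 := ((a+y)/N)%nat) in *. set (r := ((a+y) mod N)%nat) in *.
  destruct (lt_eq_lt_dec q1 q2) as [[h|h]|h].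
  - assert (N*q2 >= N*q1 + N)%nat by nia. lia.
  - subst. lia.
  - assert (N*q1 >= N*q2 + N)%nat by nia. lia.
Qed.

Theorem mainTheorem2 (kappa m : R) (hkappa : 0 < kappa) (hm : 0 < m) :
  exists C : R, 0 < C /\
    forall (N k1 : nat), (2 <= N)%nat -> (0 < k1)%nat -> (k1 < N)%nat ->
      S1 kappa m N k1 <= C * (INR N) ^ 2.
Proof.
  set (K := (3 / (4 * kappa ^ 2))^2 * (2 * sqrt (kappa / m))^2).
  assert (hK : 0 < K).
  { unfold K. assert (0 < sqrt (kappa/m)) by (apply sqrt_lt_R0; apply Rdiv_lt_0_compat; lra).
    assert (0 < 3 / (4 * kappa ^ 2)) by (apply Rdiv_lt_0_compat; nra).
    apply Rmult_lt_0_compat; apply pow2_gt_0; lra. }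
  pose proof PI_RGT_0 as hpi.
  exists (K * (/4 + 32 / PI^2)). split.
  { apply Rmult_lt_0_compat; auto. assert (0 < 32/PI^2) by (apply Rdiv_lt_0_compat; [lra|apply pow2_gt_0; lra]). lra. }
  intros N k1 hN h1 h1'.
  set (L := seq 1 (N - 1)).
  set (M0 := 16 / (th N k1)^2). set (M2 := 16 / (PI - th N k1)^2).
  pose proof (th_range N k1 ltac:(lia)) as t1.
  assert (hM0 : 0 <= M0) by (apply Rlt_le, Rdiv_lt_0_compat; [lra| apply pow2_gt_0; lra]).
  assert (hM2 : 0 <= M2) by (apply Rlt_le, Rdiv_lt_0_compat; [lra| apply pow2_gt_0; lra]).
  assert (step1 : S1 kappa m N k1 <=
    SL (fun k2 => SL (fun k3 => K * (/4 + Ilt k1 k3 * (Ilt k1 k2 * M0) + Igt k1 k3 * (Igt k1 k2 * M2))) L) L).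
  { unfold S1, sum_open. fold L.
    apply SL_le. intros k2 hk2. apply SL_le. intros k3 hk3.
    apply in_seq in hk2. apply in_seq in hk3.
    apply (SL_unique L (fun k4 => ((k2 + k3 + k4) mod N)%nat) (k1 mod N)
       (fun k4 => Rabs (Defs.A1 kappa m N k1 k2 k3 k4) ^ 2)).
    - apply seq_NoDup.
    - intros x y hx hy ex ey. apply in_seq in hx. apply in_seq in hy.
      apply (mod_inj N (k2+k3)); try lia.
    - intros k4 hk4 e. apply in_seq in hk4.
      eapply Rle_trans; [apply term_bound; auto; lia|].
      fold M0 M2. right. unfold K. ring.
    - pose proof (Ilt_nn k1 k2). pose proof (Ilt_nn k1 k3). pose proof (Igt_nn k1 k2). pose proof (Igt_nn k1 k3).
      apply Rmult_le_pos; [lra|].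
      assert (0 <= Ilt k1 k3 * (Ilt k1 k2 * M0)) by (apply Rmult_le_pos; auto; apply Rmult_le_pos; auto).
      assert (0 <= Igt k1 k3 * (Igt k1 k2 * M2)) by (apply Rmult_le_pos; auto; apply Rmult_le_pos; auto).
      lra. }
  rewrite (SL_ext L _ (fun k2 => K * (INR (length L) * /4 + Ilt k1 k2 * (SL (Ilt k1) L * M0)
       + Igt k1 k2 * (SL (Igt k1) L * M2)))) in step1.
  2:{ intros k2. rewrite SL_comb. ring. }
  rewrite SL_comb in step1.
  set (x := SL (Ilt k1) L) in *. set (y := SL (Igt k1) L) in *.
  assert (hx : 0 <= x <= INR k1).
  { unfold x, L. rewrite SL_Ilt. split; [apply pos_INR|]. apply le_INR. lia. }
  assert (hy : 0 <= y <= INR (N - k1)).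
  { unfold y, L. rewrite SL_Igt. split; [apply pos_INR|]. apply le_INR. lia. }
  assert (hn : 0 <= INR (length L) <= INR N).
  { unfold L. rewrite length_seq. split; [apply pos_INR|]. apply le_INR. lia. }
  assert (hN0 : 0 < INR N) by (apply lt_0_INR; lia).
  assert (hk0 : 0 < INR k1) by (apply lt_0_INR; lia).
  assert (hx2 : x * (x * M0) <= 16 * INR N ^2 / PI^2).
  { apply Rle_trans with (INR k1 * (INR k1 * M0)).
    { apply Rmult_le_compat; try nra. }
    right. unfold M0, th. field. split; lra. }
  assert (hy2 : y * (y * M2) <= 16 * INR N ^2 / PI^2).
  { assert (hNk : 0 < INR (N - k1)) by (apply lt_0_INR; lia).
    apply Rle_trans with (INR (N - k1) * (INR (N - k1) * M2)).
    { apply Rmult_le_compat; try nra. }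
    right. unfold M2, th. rewrite minus_INR in * by lia.
    replace (PI - PI * INR k1 / INR N) with (PI * (INR N - INR k1) / INR N) by (field; lra).
    field. repeat split; lra. }
  assert (INR (length L) * (INR (length L) * /4) <= INR N ^2 * /4) by nra.
  eapply Rle_trans; [exact step1|].
  replace (K * (/ 4 + 32 / PI ^ 2) * INR N ^ 2) with (K * (INR N ^2 * /4 + 16 * INR N ^2 / PI^2 + 16 * INR N ^2 / PI^2))
    by (field; lra).
  apply Rmult_le_compat_l; lra.
Qed.
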